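(* Let $\mu\neq0$ and let $\gamma$ be an arc-length parametrized curve in $\mathbb M^2(\rho)$ whose curvature $\kappa$ is non-constant and satisfies $\frac{d^2}{ds^2}(e^{\mu\kappa})+(\kappa^2-\kappa/\mu+\rho)e^{\mu\kappa}=0$. Then there is a constant $d\in\mathbb R$ such that $$\mu^4\kappa_s^2=d\,e^{-2\mu\kappa}-(\mu\kappa-1)^2-\rho\mu^2 .$$
   Context: $\mathbb M^2(\rho)$ is the simply connected complete surface of constant curvature $\rho$; $\kappa$ is the signed geodesic curvature of $\gamma$ and $\kappa_s$ its derivative with respect to arc-length $s$. *)

(* Defs.v *)
From Stdlib Require Import Reals.
From Coquelicot Require Import Coquelicot.
Open Scope R_scope.

Definition is_interval (I : R -> Prop) : Prop :=
  forall x y z : R, I x -> I y -> x <= z <= y -> I z.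

(* Main.v *)
Require Import Defs.
From Stdlib Require Import Reals Lra.
From Coquelicot Require Import Coquelicot.
Open Scope R_scope.

Theorem proposition2p5 (rho mu : R) (I : R -> Prop) (kappa : R -> R) :
  mu <> 0 ->
  open I -> is_interval I ->
  (forall s, I s -> ex_derive kappa s /\ ex_derive (Derive kappa) s) ->
  (exists s1 s2, I s1 /\ I s2 /\ kappa s1 <> kappa s2) ->
  (forall s, I s ->
     Derive_n (fun t => exp (mu * kappa t)) 2 s
     + (kappa s ^ 2 - kappa s / mu + rho) * exp (mu * kappa s) = 0) ->
  exists d : R, forall s, I s ->
    mu ^ 4 * (Derive kappa s) ^ 2
    = d * exp (- (2 * mu * kappa s)) - (mu * kappa s - 1) ^ 2 - rho * mu ^ 2.
Proof.
  intros Hmu Hop Hint Hder [s0 [_ [Hs0 _]]] Hode.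
  set (F := fun t => exp (2 * mu * kappa t) *
     (mu ^ 4 * (Derive kappa t) ^ 2 + (mu * kappa t - 1) ^ 2 + rho * mu ^ 2)).
  assert (Hinner : forall s, I s ->
    mu * Derive (Derive kappa) s + mu ^ 2 * (Derive kappa s) ^ 2
    + (kappa s ^ 2 - kappa s / mu + rho) = 0).
  { intros s Hs. specialize (Hode s Hs).
    assert (E : Derive_n (fun t => exp (mu * kappa t)) 2 s =
      mu * Derive (Derive kappa) s * exp (mu * kappa s) +
      mu * Derive kappa s * (mu * Derive kappa s * exp (mu * kappa s))).
    { simpl.
      rewrite (Derive_ext_loc _ (fun t => mu * Derive kappa t * exp (mu * kappa t))).
      - destruct (Hder s Hs) as [H1 H2].
        apply is_derive_unique. auto_derive.
        + repeat split; assumption.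
        + change (Derive (fun x => Derive kappa x) s) with (Derive (Derive kappa) s); change (Derive (fun x => kappa x) s) with (Derive kappa s); simpl; ring.
      - apply filter_imp with (2 := Hop s Hs). intros t Ht.
        destruct (Hder t Ht) as [H1 H2].
        apply is_derive_unique. auto_derive.
        + repeat split; assumption.
        + change (Derive (fun x => Derive kappa x) t) with (Derive (Derive kappa) t); change (Derive (fun x => kappa x) t) with (Derive kappa t); simpl; ring. }
    rewrite E in Hode.
    assert (Hexp : exp (mu * kappa s) > 0) by apply exp_pos.
    apply (Rmult_eq_reg_r (exp (mu * kappa s))); [| lra].
    rewrite Rmult_0_l. rewrite <- Hode. ring. }
  assert (HF : forall s, I s -> is_derive F s 0).
  { intros s Hs. destruct (Hder s Hs) as [H1 H2].
    assert (Hi := Hinner s Hs).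
    unfold F. auto_derive.
    - repeat split; assumption.
    - transitivity (2 * mu ^ 3 * Derive kappa s * exp (2 * mu * kappa s) *
        (mu * Derive (Derive kappa) s + mu ^ 2 * (Derive kappa s) ^ 2
         + (kappa s ^ 2 - kappa s / mu + rho))).
      + change (Derive (fun x => Derive kappa x) s) with (Derive (Derive kappa) s); change (Derive (fun x => kappa x) s) with (Derive kappa s); simpl; field. exact Hmu.
      + rewrite Hi. ring. }
  assert (Hconst : forall s, I s -> F s = F s0).
  { intros s Hs.
    destruct (MVT_gen F s0 s (fun _ => 0)) as [c [_ Hc]].
    - intros x Hx. apply HF.
      unfold Rmin, Rmax in Hx. destruct (Rle_dec s0 s).
      + apply (Hint s0 s); auto; lra.
      + apply (Hint s s0); auto; lra.
    - intros x Hx. apply continuity_pt_filterlim.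
      apply (ex_derive_continuous F). eexists. apply HF.
      unfold Rmin, Rmax in Hx. destruct (Rle_dec s0 s).
      + apply (Hint s0 s); auto; lra.
      + apply (Hint s s0); auto; lra.
    - lra. }
  exists (F s0). intros s Hs. rewrite <- (Hconst s Hs). unfold F.
  assert (He : exp (2 * mu * kappa s) * exp (- (2 * mu * kappa s)) = 1).
  { rewrite <- exp_plus. replace (2 * mu * kappa s + - (2 * mu * kappa s)) with 0 by ring.
    apply exp_0. }
  transitivity ((mu ^ 4 * Derive kappa s ^ 2 + (mu * kappa s - 1) ^ 2 + rho * mu ^ 2)
     * (exp (2 * mu * kappa s) * exp (- (2 * mu * kappa s))) - (mu * kappa s - 1) ^ 2 - rho * mu ^ 2).
  - rewrite He. ring.
  - ring.
Qed.
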